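(* Let $q$ be a prime power, let $\gamma\in\mathbb{F}_q^*$ have multiplicative order $l$, and let $D=\langle\gamma\rangle=\{1,\gamma,\dots,\gamma^{l-1}\}$. Let $G=\mathbb{F}_q\rtimes\mathbb{Z}_l$ be the group on the set $\mathbb{F}_q\times\mathbb{Z}_l$ with multiplication $(x,i)(y,j)=(x+\gamma^i y,\ i+j)$. Let $D'\subseteq\mathbb{F}_q$ satisfy $dD'=D'$ for all $d\in D$, let $u\in\mathbb{F}_q^*$, let $S=\{-u+x: x\in D'\}$, $s=|S|$, and $E=\{(x,i): x\in S,\ i\in\mathbb{Z}_l\}\subseteq G$. Suppose $0\notin S$ and that there are integers $\alpha,\beta$ such that for every $y\in\mathbb{F}_q$, $$\#\{(x,d)\in D'\times D:\ x-ud=y\}=\beta+\alpha\,[y=0]$$ (equivalently, in the group ring $\mathbb{Z}[(\mathbb{F}_q,+)]$, $\underline{D'}\,\underline{uD}^{-1}=\alpha\mathbf{1}+\beta\,\underline{\mathbb{F}_q}$). Then the Cayley digraph $\mathrm{Cay}(G,E)$ is a directed strongly regular graph with parameters $(lq,\ ls,\ \beta s,\ \beta s+\alpha,\ \beta s)$.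
   Context: For a group $G$ and $E\subseteq G$ not containing the identity, the Cayley digraph $\mathrm{Cay}(G,E)$ has vertex set $G$ and an arc $g\to h$ iff $g^{-1}h\in E$. $[y=0]$ is $1$ if $y=0$ and $0$ otherwise. In the group ring notation, $\underline{X}=\sum_{x\in X}x$ and $\underline{X}^{-1}=\sum_{x\in X}x^{-1}$ (here the group is additive, so $x^{-1}=-x$). A directed strongly regular graph with parameters $(v,k,t,\lambda,\mu)$ is a digraph (no loops, no multiple arcs) on $v$ vertices whose adjacency matrix $A$ satisfies $A^2=tI+\lambda A+\mu(J-I-A)$ and $AJ=JA=kJ$. *)

(* Defs.v *)
From HB Require Import structures.
From mathcomp Require Import all_boot all_order all_algebra all_field.
Set Implicit Arguments. Unset Strict Implicit. Unset Printing Implicit Defensive.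
Import Order.TTheory GRing.Theory Num.Theory.
Local Open Scope ring_scope.

(* Z_l represented by 'I_l with addition mod l (works for every l >= 1). *)
Lemma ord_pos (l : nat) (i : 'I_l) : (0 < l)%N.
Proof. exact: leq_ltn_trans (leq0n i) (ltn_ord i). Qed.

Definition zadd (l : nat) (i j : 'I_l) : 'I_l :=
  Ordinal (ltn_pmod (i + j) (ord_pos i)).
Definition zopp (l : nat) (i : 'I_l) : 'I_l :=
  Ordinal (ltn_pmod (l - i) (ord_pos i)).

Definition sdmul (F : fieldType) (l : nat) (gamma : F) (g h : F * 'I_l)
  : F * 'I_l := (g.1 + gamma ^+ g.2 * h.1, zadd g.2 h.2).
Definition sdinv (F : fieldType) (l : nat) (gamma : F) (g : F * 'I_l)
  : F * 'I_l := (- ((gamma ^+ g.2)^-1 * g.1), zopp g.2).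

Definition cay_arc (F : finFieldType) (l : nat) (gamma : F)
  (E : {set F * 'I_l}) : rel (F * 'I_l) :=
  fun g h => sdmul gamma (sdinv gamma g) h \in E.

Definition adjmx (T : finType) (r : rel T) : 'M[int]_#|T| :=
  \matrix_(i, j) (r (enum_val i) (enum_val j))%:R.

Definition dsrg (T : finType) (r : rel T) (v k : nat) (t lam mu : int) : Prop :=
  let A := adjmx r in
  let J := const_mx 1 : 'M[int]_#|T| in
  [/\ #|T| = v,
      forall x, ~~ r x x,
      A *m A = t *: 1%:M + lam *: A + mu *: (J - 1%:M - A),
      A *m J = (k%:Z) *: J &
      J *m A = (k%:Z) *: J].

(* Main.v *)
Require Import Defs.
From HB Require Import structures.
From mathcomp Require Import all_boot all_order all_algebra all_field.
From mathcomp Require Import ring.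
Set Implicit Arguments. Unset Strict Implicit. Unset Printing Implicit Defensive.
Import Order.TTheory GRing.Theory Num.Theory.
Local Open Scope ring_scope.

Lemma gam_ne0 (F : fieldType) l (g : F) : l.-primitive_root g -> g != 0.
Proof.
move=> Hg; apply/eqP => g0; have := prim_expr_order Hg.
by rewrite g0 expr0n eqn0Ngt (prim_order_gt0 Hg) /= => /eqP; rewrite eq_sym oner_eq0.
Qed.

Lemma gam_zadd (F : fieldType) l (g : F) (a b : 'I_l) : l.-primitive_root g ->
  g ^+ zadd a b = g ^+ a * g ^+ b.
Proof. by move=> Hg; rewrite /= (prim_expr_mod Hg) exprD. Qed.

Lemma gam_zopp (F : fieldType) l (g : F) (a : 'I_l) : l.-primitive_root g ->
  g ^+ zopp a = (g ^+ a)^-1.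
Proof.
move=> Hg; rewrite /= (prim_expr_mod Hg).
have nz : g ^+ a != 0 by rewrite expf_neq0 // (gam_ne0 Hg).
by rewrite -[LHS]mulr1 -(mulfV nz) mulrA -exprD subnK ?(ltnW (ltn_ord a)) //
  (prim_expr_order Hg) mul1r.
Qed.

Lemma gam_inj (F : fieldType) l (g : F) : l.-primitive_root g ->
  injective (fun k : 'I_l => g ^+ k).
Proof.
move=> Hg a b /eqP; rewrite (eq_prim_root_expr Hg) !modn_small //.
by move=> /eqP /val_inj.
Qed.

Lemma arcE (F : finFieldType) l (g : F) (E : {set F * 'I_l}) (S : {set F}) x y :
  l.-primitive_root g -> E = [set w : F * 'I_l | w.1 \in S] ->
  cay_arc g E x y = ((g ^+ x.2)^-1 * (y.1 - x.1) \in S).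
Proof.
move=> Hg ->; rewrite /cay_arc /sdmul /sdinv inE /= (gam_zopp _ Hg).
by rewrite mulrBr addrC.
Qed.

Definition ind (b : bool) : int := b%:R.

Lemma ind_and a b : ind (a && b) = ind a * ind b.
Proof. by case: a; case: b; rewrite /ind /= ?mulr1 ?mulr0 ?mul0r. Qed.

Lemma sum_ind_card (T : finType) (A : {pred T}) :
  \sum_(t : T) ind (t \in A) = #|A|%:Z.
Proof.
rewrite -natz -sum1_card natr_sum [RHS]big_mkcond /=; apply: eq_bigr => t _.
by rewrite /ind; case: (t \in A).
Qed.

Lemma sum_pt (F : finFieldType) (c : F) (f : F -> int) :
  \sum_(a : F) ind (a == c) * f a = f c.
Proof.
rewrite (bigD1 c) //= eqxx /ind mul1r big1 ?addr0 // => a /negbTE ->.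
by rewrite mul0r.
Qed.

Lemma zopp_inj (F : fieldType) l (g : F) : l.-primitive_root g ->
  injective (@zopp l).
Proof.
move=> Hg a b H; apply: (gam_inj Hg); apply: invr_inj.
by rewrite /= -!(gam_zopp _ Hg) H.
Qed.

Lemma zadd_inj (F : fieldType) l (g : F) (m : 'I_l) : l.-primitive_root g ->
  injective (fun k => zadd k m).
Proof.
move=> Hg a b H; apply: (gam_inj Hg) => /=.
have nz : g ^+ m != 0 by rewrite expf_neq0 // (gam_ne0 Hg).
by apply: (mulIf nz); rewrite -!(gam_zadd _ _ Hg) H.
Qed.

Lemma sum_zopp (F : fieldType) l (g : F) (f : F -> int) : l.-primitive_root g ->
  \sum_(k : 'I_l) f ((g ^+ k)^-1) = \sum_(k : 'I_l) f (g ^+ k).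
Proof.
move=> Hg; rewrite (reindex_inj (zopp_inj Hg)) /=; apply: eq_bigr => k _.
by rewrite (gam_zopp _ Hg) invrK.
Qed.

Lemma sum_shift (F : fieldType) l (g : F) (m : 'I_l) (f : F -> int) :
  l.-primitive_root g ->
  \sum_(k : 'I_l) f (g ^+ k * g ^+ m) = \sum_(k : 'I_l) f (g ^+ k).
Proof.
move=> Hg; rewrite [RHS](reindex_inj (@zadd_inj _ _ _ m Hg)) /=; apply: eq_bigr => k _.
by rewrite (gam_zadd _ _ Hg).
Qed.

Lemma sum_D (F : finFieldType) l (g : F) (f : F -> int) : l.-primitive_root g ->
  \sum_(d in [set g ^+ i | i : 'I_l]) f d = \sum_(k : 'I_l) f (g ^+ k).
Proof.
move=> Hg; rewrite big_imset //; move=> a b _ _; exact: gam_inj Hg a b.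
Qed.

Lemma inS (F : finFieldType) (D' : {set F}) (u w : F) :
  (w \in [set - u + x | x in D']) = (u + w \in D').
Proof.
apply/imsetP/idP => [[x xD ->]|H]; first by rewrite addNKr.
by exists (u + w) => //; rewrite addKr.
Qed.

Lemma invD (F : finFieldType) l (g : F) (D' : {set F}) (k : 'I_l) (v : F) :
  l.-primitive_root g ->
  (forall d, d \in [set g ^+ i | i : 'I_l] -> [set d * x | x in D'] = D') ->
  (g ^+ k * v \in D') = (v \in D').
Proof.
move=> Hg HD; have Hk : g ^+ k \in [set g ^+ i | i : 'I_l] by apply: imset_f.
have nz : g ^+ k != 0 by rewrite expf_neq0 // (gam_ne0 Hg).
rewrite -{1}(HD _ Hk); apply/imsetP/idP => [[x xD /(mulfI nz) ->]//|H].
by exists v.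
Qed.

Lemma NE (F : finFieldType) l (g : F) (D' : {set F}) (u : F) (alpha beta : int) :
  l.-primitive_root g ->
  (forall y : F,
     (#|[set p : F * F | (p.1 \in D') && (p.2 \in [set g ^+ i | i : 'I_l]) && (p.1 - u * p.2 == y)]| : int)
       = beta + alpha * (y == 0)%:R) ->
  forall w, \sum_(k : 'I_l) ind (w + u * g ^+ k \in D') = beta + alpha * ind (w == 0).
Proof.
move=> Hg HN w; rewrite -[ind (w == 0)]/((w == 0)%:R) -HN -sum_ind_card.
have Ep : forall h : F * F -> int, \sum_p h p = \sum_a \sum_b h (a, b).
  by move=> h; rewrite pair_bigA; apply: eq_bigr => -[].
rewrite Ep.
rewrite exchange_big /= -(sum_D (fun d => ind (w + u * d \in D')) Hg) big_mkcond /=.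
apply: eq_bigr => d _.
under eq_bigr => a _ do rewrite inE /= !ind_and.
case: (d \in _); last first.
  by rewrite big1 // => a _; rewrite /ind /= mulr0 mul0r.
rewrite /ind /=.
rewrite -(sum_pt (w + u * d) (fun a => (a \in D')%:R)).
apply: eq_bigr => a _; rewrite mulr1 mulrC; congr (_ * _); congr (_ %:R).
by rewrite subr_eq.
Qed.

Lemma walks (F : finFieldType) l (g : F) (D' : {set F}) (u : F) (alpha beta : int) :
  l.-primitive_root g ->
  (forall d, d \in [set g ^+ i | i : 'I_l] -> [set d * x | x in D'] = D') ->
  (forall y : F,
     (#|[set p : F * F | (p.1 \in D') && (p.2 \in [set g ^+ i | i : 'I_l]) && (p.1 - u * p.2 == y)]| : int)
       = beta + alpha * (y == 0)%:R) ->
  forall (i : 'I_l) (x y : F),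
  \sum_(z : F) \sum_(k : 'I_l)
     ind ((g ^+ i)^-1 * (z - x) \in [set - u + x | x in D']) *
     ind ((g ^+ k)^-1 * (y - z) \in [set - u + x | x in D'])
  = beta * #|[set - u + x | x in D']|%:Z
    + alpha * ind ((g ^+ i)^-1 * (y - x) \in [set - u + x | x in D']).
Proof.
move=> Hg HD HN i x y; set S := [set - u + x | x in D'].
have nzi : g ^+ i != 0 by rewrite expf_neq0 // (gam_ne0 Hg).
transitivity (\sum_z ind ((g ^+ i)^-1 * (z - x) \in S) *
                \sum_(k : 'I_l) ind (g ^+ k * (y - z) \in S)).
  apply: eq_bigr => z _.
  by rewrite -mulr_sumr (sum_zopp (fun c => ind (c * (y - z) \in S)) Hg).
rewrite (reindex_inj (h := fun a => x + g ^+ i * a)) /=; last first.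
  by move=> a b /addrI /(mulfI nzi).
set Y := (g ^+ i)^-1 * (y - x).
transitivity (\sum_a ind (a \in S) * \sum_(k : 'I_l) ind (g ^+ k * (Y - a) \in S)).
  apply: eq_bigr => a _; rewrite (addrC x) addrK mulKf //; congr (_ * _).
  rewrite -(sum_shift i (fun c => ind (c * (Y - a) \in S)) Hg).
  apply: eq_bigr => k _; rewrite -mulrA.
  have -> : g ^+ i * (Y - a) = y - (g ^+ i * a + x).
    by rewrite /Y mulrBr mulrA mulfV // mul1r opprD addrA addrAC.
  by [].
rewrite (reindex_inj (h := fun a => a - u)) /=; last by move=> a b /addIr.
transitivity (\sum_a ind (a \in D') * (beta + alpha * ind (a == Y + u))).
  apply: eq_bigr => a _; rewrite /S inS.
  have -> : u + (a - u) = a by rewrite addrC subrK.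
  congr (_ * _); set v := Y - (a - u).
  have -> : (a == Y + u) = (v == 0) by rewrite /v subr_eq0 [RHS]eq_sym subr_eq.
  rewrite -(NE Hg HN v).
  transitivity (\sum_(k : 'I_l) ind (u * (g ^+ k)^-1 + v \in D')).
    apply: eq_bigr => k _.
    have nzk : g ^+ k != 0 by rewrite expf_neq0 // (gam_ne0 Hg).
    have E1 : g ^+ k * (u / g ^+ k + v) = u + g ^+ k * v.
      by rewrite mulrDr mulrCA mulfV ?mulr1.
    by rewrite inS -(invD k (u / g ^+ k + v) Hg HD) E1.
  rewrite (sum_zopp (fun c => ind (u * c + v \in D')) Hg).
  by apply: eq_bigr => k _; rewrite addrC.
under eq_bigr => a _ do rewrite mulrDr.
rewrite big_split /= -mulr_suml sum_ind_card.
have -> : #|S| = #|D'| by rewrite card_imset //; apply: addrI.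
have -> : \sum_a ind (a \in D') * (alpha * ind (a == Y + u)) = alpha * ind (Y \in S).
  rewrite /S inS (addrC u) -(sum_pt (Y + u) (fun a => alpha * ind (a \in D'))).
  apply: eq_bigr => a _; rewrite mulrCA [RHS]mulrCA; congr (alpha * _); exact: mulrC.
by rewrite mulrC.
Qed.

Lemma sum_enum (T : finType) (f : T -> int) :
  \sum_(k < #|T|) f (enum_val k) = \sum_(w : T) f w.
Proof. by rewrite (reindex enum_val (onW_bij _ (@enum_val_bij T))). Qed.

Lemma sum_pair (F : finFieldType) l (f : F * 'I_l -> int) :
  \sum_(w : F * 'I_l) f w = \sum_(z : F) \sum_(k : 'I_l) f (z, k).
Proof. by rewrite pair_bigA; apply: eq_bigr => -[]. Qed.

Lemma row_sum (F : finFieldType) l (g : F) (S : {set F}) (i : 'I_l) (x : F) :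
  l.-primitive_root g ->
  \sum_(z : F) \sum_(k : 'I_l) ind ((g ^+ i)^-1 * (z - x) \in S) = (l * #|S|)%:Z.
Proof.
move=> Hg; have nzi : g ^+ i != 0 by rewrite expf_neq0 // (gam_ne0 Hg).
under eq_bigr => z _ do rewrite sumr_const card_ord.
rewrite sumrMnl (reindex_inj (h := fun a => x + g ^+ i * a)) /=;
  last by move=> a b /addrI /(mulfI nzi).
under eq_bigr => a _ do rewrite (addrC x) addrK mulKf //.
by rewrite sum_ind_card -mulr_natr mulrC natz PoszM.
Qed.

Lemma col_sum (F : finFieldType) l (g : F) (S : {set F}) (y : F) :
  l.-primitive_root g ->
  \sum_(z : F) \sum_(k : 'I_l) ind ((g ^+ k)^-1 * (y - z) \in S) = (l * #|S|)%:Z.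
Proof.
move=> Hg; rewrite exchange_big /=.
transitivity (\sum_(k : 'I_l) (#|S|%:Z)); last by rewrite sumr_const card_ord -mulr_natl natz PoszM.
apply: eq_bigr => k _.
have nzk : g ^+ k != 0 by rewrite expf_neq0 // (gam_ne0 Hg).
rewrite (reindex_inj (h := fun a => y - g ^+ k * a)) /=;
  last by move=> a b /addrI /oppr_inj /(mulfI nzk).
under eq_bigr => a _ do rewrite opprB addrC subrK mulKf //.
by rewrite sum_ind_card.
Qed.

Theorem lemma4p1 (F : finFieldType) (l : nat) (gamma : F)
  (Hgamma : l.-primitive_root gamma)
  (D' : {set F}) (u : F) (alpha beta : int) :
  let D := [set gamma ^+ i | i : 'I_l] in
  let S := [set - u + x | x in D'] in
  let s := #|S| in
  let E := [set g : F * 'I_l | g.1 \in S] in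
  (forall d, d \in D -> [set d * x | x in D'] = D') ->
  u != 0 ->
  0 \notin S ->
  (forall y : F,
     (#|[set p : F * F | (p.1 \in D') && (p.2 \in D) && (p.1 - u * p.2 == y)]| : int)
       = beta + alpha * (y == 0)%:R) ->
  dsrg (cay_arc gamma E) (l * #|F|) (l * s)
       (beta * s%:Z) (beta * s%:Z + alpha) (beta * s%:Z).
Proof.
move=> D S s E HD u0 S0 HN.
have Hr : forall a b, cay_arc gamma E a b = ((gamma ^+ a.2)^-1 * (b.1 - a.1) \in S).
  by move=> a b; apply: arcE.
split.
- by rewrite card_prod card_ord mulnC.
- by move=> x; rewrite Hr subrr mulr0.
- apply/matrixP => i j; rewrite !mxE.
  under eq_bigr => k _ do rewrite !mxE.
  rewrite (sum_enum (fun w => (cay_arc gamma E (enum_val i) w)%:R *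
                               (cay_arc gamma E w (enum_val j))%:R)) sum_pair.
  under eq_bigr => z _ do under eq_bigr => k _ do rewrite !Hr /=.
  have W := @walks F l gamma D' u alpha beta Hgamma HD HN (enum_val i).2 (enum_val i).1 (enum_val j).1.
  rewrite /ind in W; rewrite W -Hr /s; ring.
- apply/matrixP => i j; rewrite !mxE.
  under eq_bigr => k _ do rewrite !mxE mulr1.
  rewrite (sum_enum (fun w => (cay_arc gamma E (enum_val i) w)%:R)) sum_pair.
  under eq_bigr => z _ do under eq_bigr => k _ do rewrite Hr /=.
  have W := @row_sum F l gamma S (enum_val i).2 (enum_val i).1 Hgamma.
  by rewrite /ind in W; rewrite W mulr1.
- apply/matrixP => i j; rewrite !mxE.
  under eq_bigr => k _ do rewrite !mxE mul1r.
  rewrite (sum_enum (fun w => (cay_arc gamma E w (enum_val j))%:R)) sum_pair.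
  under eq_bigr => z _ do under eq_bigr => k _ do rewrite Hr /=.
  have W := @col_sum F l gamma S (enum_val j).1 Hgamma.
  by rewrite /ind in W; rewrite W mulr1.
Qed.
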